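(* Let $V$ be a vertex algebra, $M_1,M_2,M_3$ be $V$-modules and $\mathcal{Y}$ an intertwining operator of type $\binom{M_3}{M_1\ M_2}$. Then for all $v\in V$, $a\in M_1$, $b\in M_2$: (v) $[v_\lambda(a\cdot b)]=a\cdot[v_\lambda b]+[v_\lambda a]\cdot b+\int_0^\lambda[[v_\lambda a]_\mu b]^0\,d\mu$; (vi) $[(v\cdot a)_\lambda b]=(e^{T\partial_\lambda}v)[a_\lambda b]+(e^{T\partial_\lambda}a)[v_\lambda b]+\int_0^\lambda[a_\mu[v_{\lambda-\mu}b]]\,d\mu$; (vii) $[a_\lambda(v\cdot b)]=v\cdot[a_\lambda b]+[a_\lambda v]\cdot b+\int_0^\lambda[[a_\lambda v]_\mu b]\,d\mu$.
   Context: Notation: for $n\in\mathbb{C}$, $\lambda^{(n)}:=\lambda^n/\Gamma(n+1)$ with $1/\Gamma$ the entire reciprocal Gamma function (so $\lambda^{(n)}=0$ for $n\in\mathbb{Z}_{<0}$, $\lambda^{(n)}=\lambda^n/n!$ for $n\in\mathbb{Z}_{\ge0}$); $T^{(j)}:=T^j/j!$. Fix $S\subset\mathbb{C}$ with $S+\mathbb{Z}=S$, $S/\mathbb{Z}$ finite; $U[[z]]z^{-S}$ denotes formal sums $\sum_nf_nz^n$ with $n$ in a finite union of sets $-d+\mathbb{Z}_{\ge0}$, $d\in S$; the formal Fourier transform is $F^\lambda_z(\sum_nu_nz^{-n-1})=\sum_nu_n\lambda^{(n)}$. A vertex algebra $V$ has vacuum $\mathbf 1$, fields $Y(v,z)=\sum_{n\in\mathbb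 Z}v_{(n)}z^{-n-1}$ and translation operator $T$. A $V$-module is a vector space $M$ with $T\in\mathrm{End}(M)$ and $Y^M(v,z)=\sum_{n\in\mathbb Z}v_{(n)}z^{-n-1}\in\mathrm{Hom}(M,M((z)))$ such that $Y^M(\mathbf 1,z)=\mathrm{id}_M$, $[T,Y^M(v,z)]=\partial_zY^M(v,z)$, and the Borcherds identity below holds with $\mathcal Y=Y^M$ and $k\in\mathbb Z$. An intertwining operator of type $\binom{M_3}{M_1\ M_2}$ is a linear map $M_1\to\mathrm{Hom}(M_2,M_3[[z]]z^{-S})$, $a\mapsto\mathcal Y(a,z)=\sum_{n\in\mathbb C}a_{(n)}z^{-n-1}$, such that (I1) $T\mathcal Y(a,z)-\mathcal Y(a,z)T=\mathcal Y(Ta,z)=\partial_z\mathcal Y(a,z)$, and (I2) for all $v\in V,a\in M_1,b\in M_2$, $n,m\in\mathbb Z$, $k\in\mathbb C$: $\sum_{j\ge0}(-1)^j\binom nj\big(v_{(m+n-j)}a_{(k+j)}b-(-1)^na_{(n+k-j)}v_{(m+j)}b\big)=\sum_{j\ge0}\binom mj(v_{(n+j)}a)_{(m+k-j)}b$. Brackets and products: for a $V$-module $M$, $v\in V$, $c\in M$: $[v_\lambda c]:=\sum_{j\in\mathbb Z_{\ge0}}\lambda^{(j)}v_{(j)}c$ and $v\cdot c:=v_{(-1)}c$. For $a\in M_1,b\in M_2$: $[a_\lambda b]:=F^\lambda_z(\mathcal Y(a,z)b)=\sum_{n\in\mathbb C}\lambda^{(n)}a_{(n)}b$, $[a_\lambda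 b]^0:=\sum_{n\in\mathbb Z_{\ge0}}\lambda^{(n)}a_{(n)}b$, and $a\cdot b:=a_{(-1)}b$. All brackets and products are extended coefficientwise to expressions depending polynomially or as series on auxiliary variables; e.g. $[v_{\lambda-\mu}b]:=\sum_{j\ge0}(\lambda-\mu)^{(j)}v_{(j)}b$ with $(\lambda-\mu)^{(j)}=(\lambda-\mu)^j/j!$. For $x\in V$ or $x\in M_1$ and an expression $P(\lambda)$: $(e^{T\partial_\lambda}x)P(\lambda):=\sum_{j\ge0}(T^{(j)}x)\cdot\partial_\lambda^jP(\lambda)$. $[a_\lambda v]:=-[v_{-\lambda-T}a]:=-\sum_{j\ge0}\frac{(-\lambda-T)^j}{j!}(v_{(j)}a)\in M_1[\lambda]$, with $T$ acting on $M_1$. The formal integral $\int_0^\lambda\cdot\,d\mu$ acts on formal linear combinations of powers $\mu^c$ ($c\in\mathbb C$) with coefficients possibly depending on $\lambda$ (treated as constants; polynomial factors in $\lambda-\mu$ are expanded first): $\int_0^\lambda\mu^{(c)}d\mu:=\lambda^{(c+1)}$ for $c\in\mathbb C\setminus\mathbb Z_{<0}$, and $\int_0^\lambda\mu^cd\mu:=0$ for $c\in\mathbb Z_{<0}$. *)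

(* Defs.v *)
From mathcomp Require Import all_boot all_order all_algebra.
From mathcomp Require Import classical_sets boolp fsbigop.
From mathcomp Require Import complex.
From mathcomp Require Import Rstruct.
Set Implicit Arguments.
Unset Strict Implicit.
Unset Printing Implicit Defensive.
Import GRing.Theory.
Local Open Scope ring_scope.

Definition CC : numClosedFieldType := (Rdefinitions.R)[i].

(* Sum over j : nat of a finitely supported family (all sums used below are
   finite by the truncation conditions; by convention the value is 0 if the
   support is infinite). *)
Definition fsum (M : zmodType) (f : nat -> M) : M := \sum_(j \in [set: nat]) f j.

Definition gbinom (x : CC) (j : nat) : CC :=
  (\prod_(i < j) (x - i%:R)) / (j`!)%:R.

Definition lin (A B : lmodType CC) (f : A -> B) : Prop :=
  forall (s : CC) (x y : A), f (s *: x + y) = s *: f x + f y.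

Definition Tdiv (A : lmodType CC) (T : A -> A) (j : nat) (x : A) : A :=
  (j`!%:R)^-1 *: iter j T x.

Definition negint (c : CC) : Prop := exists k : nat, c = - (k.+1)%:R.

(* Vertex algebras, modules, intertwining operators.
   Modes:  Y v n u = v_(n) u, i.e. Y(v,z) = sum_n v_(n) z^{-n-1}. *)

Definition borcherds_int (V M : lmodType CC)
    (Y : V -> int -> V -> V) (YM : V -> int -> M -> M) : Prop :=
  forall (v a : V) (c : M) (n m k : int),
    fsum (fun j : nat =>
      ((-1) ^+ j * gbinom n%:~R j) *:
        (YM v (m + n - j%:Z) (YM a (k + j%:Z) c)
         - (-1 : CC) ^ n *: YM a (n + k - j%:Z) (YM v (m + j%:Z) c)))
    = fsum (fun j : nat => gbinom m%:~R j *: YM (Y v (n + j%:Z) a) (m + k - j%:Z) c).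

Definition is_vertex_algebra (V : lmodType CC) (vac : V) (T : V -> V)
    (Y : V -> int -> V -> V) : Prop :=
  [/\
      lin T,
      (forall (n : int) (u : V), lin (fun v => Y v n u)),
      (forall (n : int) (v : V), lin (Y v n)),
      (* Y(v,z)u in V((z)) *)
      (forall v u : V, exists N : int, forall n : int, (N <= n)%R -> Y v n u = 0) &
    [/\ (* vacuum axioms: Y(vac,z) = id, Y(v,z)vac = v + O(z), T vac = 0 *)
      (forall (n : int) (u : V), Y vac n u = if n == (-1)%R then u else 0),
      (forall v : V, Y v (-1) vac = v /\ forall n : int, (0 <= n)%R -> Y v n vac = 0),
      T vac = 0,
      (* translation covariance [T, Y(v,z)] = d/dz Y(v,z) *)
      (forall (v u : V) (n : int), T (Y v n u) - Y v n (T u) = - n%:~R *: Y v (n - 1) u)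
    &
      borcherds_int Y Y]].

Definition is_va_module (V : lmodType CC) (vac : V) (Y : V -> int -> V -> V)
    (M : lmodType CC) (TM : M -> M) (YM : V -> int -> M -> M) : Prop :=
  [/\ lin TM,
      (forall (n : int) (c : M), lin (fun v => YM v n c)),
      (forall (n : int) (v : V), lin (YM v n)),
      (forall (v : V) (c : M), exists N : int, forall n : int, (N <= n)%R -> YM v n c = 0) &
    [/\ (forall (n : int) (c : M), YM vac n c = if n == (-1)%R then c else 0),
      (forall (v : V) (c : M) (n : int),
         TM (YM v n c) - YM v n (TM c) = - n%:~R *: YM v (n - 1) c)
    & borcherds_int Y YM]].

Definition admissible_exponents (S : set CC) : Prop :=
  (forall (s : CC) (z : int), S s -> S (s + z%:~R)) /\
  (exists L : seq CC, forall s, S s -> exists2 d, d \in L & exists z : int, s = d + z%:~R).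

(* Intertwining operator Y of type (M3 / M1 M2):
   io a n b = a_(n) b  (n in C), i.e. Y(a,z)b = sum_n a_(n) b z^{-n-1}. *)
Definition is_intertwining (S : set CC) (V : lmodType CC)
    (M1 M2 M3 : lmodType CC)
    (T1 : M1 -> M1) (T2 : M2 -> M2) (T3 : M3 -> M3)
    (Y1 : V -> int -> M1 -> M1) (Y2 : V -> int -> M2 -> M2) (Y3 : V -> int -> M3 -> M3)
    (io : M1 -> CC -> M2 -> M3) : Prop :=
  [/\
      (forall (n : CC) (b : M2), lin (fun a => io a n b)),
      (forall (n : CC) (a : M1), lin (io a n)),
      (* Y(a,z)b in M3[[z]]z^{-S}: the exponents -n-1 of z with a_(n)b <> 0
         lie in a finite union of sets -d + Z_{>=0}, d in S *)
      (forall (a : M1) (b : M2), exists ds : seq CC, (forall d, d \in ds -> S d) /\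
         forall n : CC, io a n b != 0 ->
           exists2 d, d \in ds & exists k : nat, (- n - 1) = - d + k%:R),
      (forall (a : M1) (b : M2) (n : CC),
         T3 (io a n b) - io a n (T2 b) = io (T1 a) n b /\
         io (T1 a) n b = - n *: io a (n - 1) b)
    &
      (forall (v : V) (a : M1) (b : M2) (n m : int) (k : CC),
        fsum (fun j : nat =>
          ((-1) ^+ j * gbinom n%:~R j) *:
            (Y3 v (m + n - j%:Z) (io a (k + j%:R) b)
             - (-1 : CC) ^ n *: io a (n%:~R + k - j%:R) (Y2 v (m + j%:Z) b)))
        = fsum (fun j : nat => gbinom m%:~R j *: io (Y1 v (n + j%:Z) a) (m%:~R + k - j%:R) b))].

(* A formal expression  sum_{c in C} F(c) lambda^{(c)}  (values in M) is represented
   by its coefficient function  F : CC -> M.  Since lambda^{(c)} = 0 for c a negative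
   integer and the lambda^{(c)}, c not a negative integer, are linearly independent,
   two expressions are equal iff their coefficients agree off the negative integers. *)
Definition lexpr (M : lmodType CC) := CC -> M.

Definition lexpr_eq (M : lmodType CC) (F G : lexpr M) : Prop :=
  forall c : CC, ~ negint c -> F c = G c.

(* A polynomial  sum_{j>=0} P(j) lambda^{(j)}  seen as a formal expression *)
Definition lpoly (M : lmodType CC) (P : nat -> M) : lexpr M :=
  fun c => fsum (fun j : nat => if c == j%:R then P j else 0).

(* Two-variable expressions  sum_{i in N, d in C} G(i,d) lambda^{(i)} mu^{(d)}
   (polynomial in lambda).  Formal integral  int_0^lambda . dmu :
   lambda^{(i)} mu^{(d)} |-> lambda^{(i)} lambda^{(d+1)} = binom(d+1+i, i) lambda^{(d+1+i)}
   for d not a negative integer, and |-> 0 for d a negative integer. *)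
Definition lint (M : lmodType CC) (G : nat -> CC -> M) : lexpr M :=
  fun c => fsum (fun i : nat =>
    if `[< negint (c - 1 - i%:R) >] then 0 else gbinom c i *: G i (c - 1 - i%:R)).

(* Brackets.  [v_lambda c] = sum_{j>=0} lambda^{(j)} v_(j) c  (polynomial part) *)
Definition vbr (V M : lmodType CC) (YM : V -> int -> M -> M) (v : V) (c : M) : nat -> M :=
  fun j => YM v j%:Z c.

(* [a_lambda b] = sum_{n in C} lambda^{(n)} a_(n) b *)
Definition iobr (M1 M2 M3 : lmodType CC) (io : M1 -> CC -> M2 -> M3)
    (a : M1) (b : M2) : lexpr M3 :=
  fun c => io a c b.

(* [a_lambda b]^0 = sum_{n in Z>=0} lambda^{(n)} a_(n) b *)
Definition iobr0 (M1 M2 M3 : lmodType CC) (io : M1 -> CC -> M2 -> M3)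
    (a : M1) (b : M2) : nat -> M3 :=
  fun n => io a n%:R b.

(* [a_lambda v] := - [v_{-lambda-T} a] = - sum_j (-lambda-T)^j/j! (v_(j) a)
   = sum_i lambda^{(i)} ( - sum_l (-1)^(i+l) T^{(l)} v_(i+l) a ) *)
Definition abr_v (V M1 : lmodType CC) (T1 : M1 -> M1) (Y1 : V -> int -> M1 -> M1)
    (a : M1) (v : V) : nat -> M1 :=
  fun i => - fsum (fun l : nat => (-1) ^+ (i + l) *: Tdiv T1 l (Y1 v (i + l)%N%:Z a)).

(* [v_{lambda-mu} b] expanded in lambda^{(i)} mu^{(k)}:
   (lambda-mu)^{(j)} = sum_{i+k=j} lambda^{(i)} (-1)^k mu^{(k)} *)
Definition vbr_lm (V M : lmodType CC) (YM : V -> int -> M -> M) (v : V) (b : M)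
    : nat -> nat -> M :=
  fun i k => (-1) ^+ k *: YM v (i + k)%N%:Z b.

(* [a_mu X] for X polynomial in lambda, mu (coefficients X i k at lambda^{(i)} mu^{(k)}),
   using mu^{(k)} mu^{(e)} = binom(e+k, k) mu^{(e+k)} *)
Definition iobr_mu (M1 M2 M3 : lmodType CC) (io : M1 -> CC -> M2 -> M3)
    (a : M1) (X : nat -> nat -> M2) : nat -> CC -> M3 :=
  fun i e => fsum (fun k : nat => gbinom e k *: io a (e - k%:R) (X i k)).

(* (e^{T d_lambda} x) F  =  sum_j (T^{(j)} x) . d_lambda^j F ,  d_lambda lambda^{(c)} = lambda^{(c-1)} *)
Definition eTd (X Y Z : lmodType CC) (T : X -> X) (prod : X -> Y -> Z)
    (x : X) (F : lexpr Y) : lexpr Z :=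
  fun c => fsum (fun j : nat => prod (Tdiv T j x) (F (c + j%:R))).

(* Main.v *)
Require Import Defs.
From mathcomp Require Import all_boot all_order all_algebra.
From mathcomp Require Import classical_sets boolp fsbigop.
From mathcomp Require Import complex.
From mathcomp Require Import Rstruct.
From mathcomp Require Import ring zify.
Import Num.Theory.
Import GRing.Theory.
Local Open Scope ring_scope.

Lemma fsumE (M : zmodType) (f : nat -> M) (N : nat) :
  (forall j, (N <= j)%N -> f j = 0) -> fsum f = \sum_(j < N) f j.
Proof.
move=> H; rewrite /fsum fsbig_ord; apply/esym/fsbig_widen => //.
move=> j [_ /=] /negP; rewrite -leqNgt => /H ->.
by [].
Qed.

Lemma fsum_single (M : zmodType) (f : nat -> M) (j0 : nat) :
  (forall j, j <> j0 -> f j = 0) -> fsum f = f j0.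
Proof.
move=> H; rewrite (@fsumE _ _ j0.+1); last first.
  by move=> j hj; apply: H => E; rewrite E ltnn in hj.
rewrite big_ord_recr /= big1 ?add0r // => i _; apply: H => E.
by have := ltn_ord i; rewrite E ltnn.
Qed.

Lemma fsum0 (M : zmodType) (f : nat -> M) :
  (forall j, f j = 0) -> fsum f = 0.
Proof. by move=> H; rewrite (@fsumE _ _ 0) ?big_ord0. Qed.

Lemma fact_neq0 n : (n`!)%:R != 0 :> CC.
Proof. by rewrite pnatr_eq0 -lt0n fact_gt0. Qed.

Lemma gbinom0 x : gbinom x 0 = 1.
Proof. by rewrite /gbinom big_ord0 fact0 divr1. Qed.

Lemma gbinomS x j : gbinom x j.+1 = gbinom x j * (x - j%:R) / j.+1%:R.
Proof.
rewrite /gbinom big_ord_recr /= factS natrM invfM.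
have := fact_neq0 j; have : j.+1%:R != 0 :> CC by rewrite pnatr_eq0.
move=> h1 h2; field; by rewrite addrC natr1 h1 h2.
Qed.

Lemma natS_neq0 n : n.+1%:R != 0 :> CC.
Proof. by rewrite pnatr_eq0. Qed.

Lemma gbinom_pascal x j : gbinom (x + 1) j.+1 = gbinom x j.+1 + gbinom x j.
Proof.
elim: j => [|j IH]; first by rewrite !gbinomS !gbinom0; field.
rewrite gbinomS IH !gbinomS.
have h1 := natS_neq0 j; have h2 := natS_neq0 j.+1.
rewrite -!natr1 in h1 h2 *.
by field; rewrite h1 h2.
Qed.

Lemma gbinom0S j : gbinom 0 j.+1 = 0.
Proof.
elim: j => [|j IH]; rewrite gbinomS; first by rewrite gbinom0 subrr mulr0 mul0r.
by rewrite IH !mul0r.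
Qed.

Lemma gbinom_nat (n j : nat) : gbinom n%:R j = 'C(n, j)%:R.
Proof.
elim: n j => [|n IH] [|j]; rewrite ?gbinom0 ?bin0 //.
  by rewrite gbinom0S bin0n.
by rewrite -natr1 gbinom_pascal !IH binS natrD.
Qed.

Lemma gbinom_small (n j : nat) : (n < j)%N -> gbinom n%:R j = 0.
Proof. by move=> h; rewrite gbinom_nat bin_small. Qed.

Lemma gbinomnn (n : nat) : gbinom n%:R n = 1.
Proof. by rewrite gbinom_nat binn. Qed.

Lemma gbinomN1 j : gbinom (-1) j = (-1) ^+ j.
Proof.
elim: j => [|j IH]; first by rewrite gbinom0.
rewrite gbinomS IH exprS; have h := natS_neq0 j; rewrite -natr1 in h *.
by field.
Qed.

Lemma gbinomN2 j : gbinom (-2) j = (-1) ^+ j * j.+1%:R.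
Proof.
elim: j => [|j IH]; first by rewrite gbinom0 mulr1.
rewrite gbinomS IH exprS; have h := natS_neq0 j; rewrite -!natr1 in h *.
by field.
Qed.

Lemma gbinom_tri c i k :
  gbinom c i * gbinom (c - i%:R) k = gbinom c (i + k) * 'C(i + k, i)%:R.
Proof.
rewrite /gbinom big_split_ord /=.
have hb := bin_fact (leq_addr k i); rewrite addKn in hb.
have e : \prod_(t < k) (c - i%:R - t%:R) = \prod_(t < k) (c - (i + t)%:R).
  by apply: eq_bigr => t _; rewrite natrD opprD addrA.
rewrite e.
have h1 := fact_neq0 i; have h2 := fact_neq0 k; have h3 := fact_neq0 (i + k).
rewrite -hb !natrM in h3 *.
move: h3; rewrite !mulf_eq0 negb_or => /andP [hC _].
field; by rewrite h1 h2.
Qed.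

Lemma alt_binom q : \sum_(i < q.+1) 'C(q, i)%:R * (-1) ^+ (q - i) = (q == 0%N)%:R :> CC.
Proof.
have := exprDn (-1 : CC) 1 q; rewrite addNr expr0n => ->.
by apply: eq_bigr => i _; rewrite expr1n mulr1 mulr_natl.
Qed.

Lemma Gid c q :
  \sum_(i < q.+1) gbinom c i * gbinom (c - i%:R) (q - i) * (-1) ^+ (q - i)
  = (q == 0%N)%:R.
Proof.
transitivity (gbinom c q * \sum_(i < q.+1) 'C(q, i)%:R * (-1) ^+ (q - i)).
  rewrite mulr_sumr; apply: eq_bigr => i _.
  by rewrite gbinom_tri subnKC ?mulrA // -ltnS.
rewrite alt_binom; case: q => [|q]; by rewrite ?gbinom0 ?mulr1 ?mulr0.
Qed.

Lemma Fid c p :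
  \sum_(i < p.+1) gbinom c i * gbinom (c - 1 - i%:R) (p - i) * (-1) ^+ (p - i) = 1.
Proof.
elim: p => [|p IH]; first by rewrite big_ord1 subnn !gbinom0 !mulr1.
rewrite big_ord_recr /= subnn gbinom0 expr0 !mulr1.
have e : forall i : 'I_p.+1,
  gbinom c i * gbinom (c - 1 - i%:R) (p.+1 - i) * (-1) ^+ (p.+1 - i)
  = gbinom c i * gbinom (c - i%:R) (p.+1 - i) * (-1) ^+ (p.+1 - i)
  + gbinom c i * gbinom (c - 1 - i%:R) (p - i) * (-1) ^+ (p - i).
  move=> i; have hi : (i <= p)%N by rewrite -ltnS.
  rewrite (subSn hi).
  have := gbinom_pascal (c - 1 - i%:R) (p - i).
  have -> : c - 1 - i%:R + 1 = c - i%:R by rewrite addrAC subrK.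
  move=> ->; rewrite exprS; ring.
rewrite (eq_bigr _ (fun i _ => e i)) big_split /= IH.
have := Gid c p.+1; rewrite big_ord_recr /= subnn gbinom0 expr0 !mulr1 => G.
by rewrite addrAC G add0r.
Qed.

Lemma Fid_nat (m p : nat) :
  \sum_(i < p.+1) (if (i < m)%N then
     gbinom m%:R i * gbinom (m%:R - 1 - i%:R) (p - i) * (-1) ^+ (p - i) else 0)
  = (p < m)%N%:R.
Proof.
set F := fun i : nat => gbinom m%:R i * gbinom (m%:R - 1 - i%:R) (p - i) * (-1) ^+ (p - i).
have := Fid m%:R p; rewrite -/F.
have -> : \sum_(i < p.+1) F i = \sum_(i < p.+1) (if (i < m)%N then F i else 0)
                              + \sum_(i < p.+1) (if (i < m)%N then 0 else F i).
  by rewrite -big_split; apply: eq_bigr => i _; case: ifP => _ /=; rewrite ?addr0 ?add0r.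
change (\sum_(i < p.+1) (if (i < m)%N then F i else 0) +
 \sum_(i < p.+1) (if (i < m)%N then 0 else F i) = 1 ->
 \sum_(i < p.+1) (if (i < m)%N then F i else 0) = (p < m)%N%:R).
case: (ltnP p m) => hpm.
  rewrite [X in _ + X]big1 ?addr0; first by [].
  move=> i _; rewrite ifT //; apply: (@leq_ltn_trans p) => //.
  by rewrite -ltnS.
have hm : (m < p.+1)%N by [].
rewrite [X in _ + X](bigD1 (Ordinal hm)) //= ltnn [X in _ + (_ + X)]big1 ?addr0.
  rewrite /F /= gbinomnn mul1r.
  have -> : m%:R - 1 - m%:R = -1 :> CC by rewrite addrAC subrr add0r.
  rewrite gbinomN1 -exprD addnn -mul2n exprM sqrrN !expr1n.
  by move=> /eqP; rewrite -subr_eq0 addrK => /eqP ->.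
move=> i /= hi; case: ifP => // /negbT; rewrite -leqNgt leq_eqVlt => /orP [/eqP e|hmi].
  by exfalso; move: hi; apply/negP; rewrite negbK; apply/eqP/val_inj; rewrite /= e.
by rewrite /F gbinom_small // !mul0r.
Qed.

Lemma tri_sum (M : zmodType) (G : nat -> nat -> M) (N : nat) :
  \sum_(p < N) \sum_(i < p.+1) G i (p - i)%N = \sum_(i < N) \sum_(k < (N - i)%N) G i k.
Proof.
elim: N => [|N IH]; first by rewrite !big_ord0.
rewrite big_ord_recr /= IH [RHS]big_ord_recr /= subSnn big_ord1.
rewrite big_ord_recr /= subnn addrA; congr (_ + _).
rewrite -big_split; apply: eq_bigr => i _ /=.
by rewrite subSn ?big_ord_recr //= ltnW.
Qed.

Lemma sum_diag (M : zmodType) (G : nat -> nat -> M) (N : nat) :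
  (forall i k, (N <= i + k)%N -> G i k = 0) ->
  \sum_(i < N) \sum_(k < N) G i k = \sum_(p < N) \sum_(i < p.+1) G i (p - i)%N.
Proof.
move=> H; rewrite tri_sum; apply: eq_bigr => i _.
rewrite (big_ord_widen N (G i) (leq_subr i N)) [RHS]big_mkcond /=.
apply: eq_bigr => k _; case: ifP => // /negbT; rewrite -leqNgt => hk.
apply: H; rewrite -(leq_add2l i) subnKC in hk; first by [].
exact: ltnW.
Qed.

Section Lin.
Variables (A B : lmodType CC) (f : A -> B) (hf : lin f).
Lemma lin0 : f 0 = 0.
Proof.
have h := hf 1 0 0; rewrite !scale1r addr0 in h.
by apply: (addrI (f 0)); rewrite addr0 -h.
Qed.
Lemma linD x y : f (x + y) = f x + f y.
Proof. by have := hf 1 x y; rewrite !scale1r. Qed.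
Lemma linZ s x : f (s *: x) = s *: f x.
Proof. by have := hf s x 0; rewrite !addr0 lin0 addr0. Qed.
Lemma linN x : f (- x) = - f x.
Proof. by rewrite -scaleN1r linZ scaleN1r. Qed.
Lemma linB x y : f (x - y) = f x - f y.
Proof. by rewrite linD linN. Qed.
Lemma lin_sum n (F : 'I_n -> A) : f (\sum_(i < n) F i) = \sum_(i < n) f (F i).
Proof.
elim: n F => [|n IH] F; first by rewrite !big_ord0 lin0.
by rewrite !big_ord_recr /= linD IH.
Qed.
End Lin.
Arguments lin0 {A B f} hf.
Arguments linD {A B f} hf x y.
Arguments linZ {A B f} hf s x.
Arguments linN {A B f} hf x.
Arguments linB {A B f} hf x y.
Arguments lin_sum {A B f} hf n F.

Lemma lpoly_nat (M : lmodType CC) (P : nat -> M) (m : nat) : lpoly P m%:R = P m.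
Proof.
rewrite /lpoly (@fsum_single _ _ m) ?eqxx // => j hj.
by rewrite ifF // eqr_nat; apply/eqP => e; apply: hj.
Qed.

Lemma negint_nat (n : nat) : ~ negint n%:R.
Proof.
move=> [k] /eqP; rewrite -subr_eq0 opprK -natrD pnatr_eq0 addnS.
by [].
Qed.

Lemma lpoly_notnat (M : lmodType CC) (P : nat -> M) c :
  (forall j : nat, c != j%:R) -> lpoly P c = 0.
Proof. by move=> H; rewrite /lpoly fsum0 // => j; rewrite ifF //; apply/negbTE. Qed.

Arguments lpoly_notnat {M} P {c}.

Definition notint (c : CC) := forall z : int, c != z%:~R.

Lemma classify c : ~ negint c -> (exists m : nat, c = m%:R) \/ notint c.
Proof.
move=> hc; case: (pselect (exists z : int, c = z%:~R)) => [[[m|k] e]|H].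
- by left; exists m.
- by exfalso; apply: hc; exists k; rewrite e.
- by right => z; apply/eqP => e; apply: H; exists z.
Qed.

Lemma notint_nat c : notint c -> forall j : nat, c != j%:R.
Proof. by move=> H j; exact: (H j). Qed.

Lemma notint_addn c (j : nat) : notint c -> notint (c + j%:R).
Proof.
move=> H z; apply/eqP => e; have := H (z - j%:Z).
by rewrite rmorphB /= -e addrK eqxx.
Qed.

Lemma notint_sub1n c (i : nat) : notint c -> notint (c - 1 - i%:R).
Proof.
move=> H z; apply/eqP => e; have := H (z + 1 + i%:Z).
rewrite !rmorphD /= -e => /negP; apply; apply/eqP; ring.
Qed.

Arguments notint_nat {c}.
Arguments notint_addn {c}.
Arguments notint_sub1n {c}.

Lemma notint_negint c : notint c -> ~ negint c.
Proof. by move=> H [k e]; have := H (- (k.+1)%:Z); rewrite e rmorphN /= eqxx. Qed.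

Lemma lint_notint (M : lmodType CC) (G : nat -> CC -> M) c : notint c ->
  lint G c = fsum (fun i => gbinom c i *: G i (c - 1 - i%:R)).
Proof.
move=> H; rewrite /lint; congr fsum; apply: funext => i.
by rewrite asboolF //; apply: notint_negint; apply: notint_sub1n.
Qed.

Lemma natB1 (m i : nat) : (i < m)%N -> m%:R - 1 - i%:R = (m - i.+1)%N%:R :> CC.
Proof. by move=> h; rewrite natrB // -natr1; ring. Qed.

Lemma lint_nat (M : lmodType CC) (G : nat -> CC -> M) (m : nat) :
  lint G m%:R = \sum_(i < m) gbinom m%:R i *: G i (m - i.+1)%N%:R.
Proof.
rewrite /lint (@fsumE _ _ m) => [|i hi]; last first.
  rewrite asboolT //; exists (i - m)%N.
  by rewrite -natr1 natrB //; ring.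
apply: eq_bigr => i _; rewrite asboolF natB1 //.
exact: negint_nat.
Qed.

Section ModT.
Variables (V : lmodType CC) (vac : V) (T : V -> V) (Y : V -> int -> V -> V).
Hypothesis HV : is_vertex_algebra vac T Y.
Variables (M : lmodType CC) (TM : M -> M) (YM : V -> int -> M -> M).
Hypothesis HM : is_va_module vac Y TM YM.

Lemma Tv_eq v : T v = Y v (-2) vac.
Proof.
case: HV => _ _ linY _ [_ vv Tvac tr _].
have := tr v vac (-1); rewrite Tvac (lin0 (linY _ _)) subr0 (proj1 (vv v)).
by rewrite rmorphN /= opprK scale1r.
Qed.

Lemma e2 : (-1 : CC) ^ (-2) = 1.
Proof. by rewrite -[-2]/(Negz 1) /exprz sqrrN expr1n invr1. Qed.
Lemma eN2 : (-2 : int)%:~R = -2 :> CC.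
Proof. by rewrite rmorphN. Qed.
Lemma e1 : (-1 : CC) ^ (-1) = -1.
Proof. by rewrite -[-1 : int]/(Negz 0) /exprz expr1 invrN1. Qed.
Lemma sgsq K : (-1 : CC) ^+ K * (-1) ^+ K = 1.
Proof. by rewrite -exprD addnn -mul2n exprM sqrrN !expr1n. Qed.

Lemma TmodeM v n c : YM (T v) n c = - n%:~R *: YM v (n - 1) c.
Proof.
case: HM => _ linYv linYc _ [vacY _ bor].
have := bor v vac c (-2) 0 n.
rewrite [X in _ = X -> _](@fsum_single _ _ 0) => [|j]; last first.
  by case: j => // j _; rewrite gbinom0S scale0r.
rewrite gbinom0 scale1r addr0 subr0 -Tv_eq => H.
rewrite !add0r in H; rewrite -H.
have lYc0 : forall p w, YM w p 0 = 0 by move=> p w; apply: (lin0 (linYc _ _)).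
case: n H => [[|K]|K] _.
- rewrite fsum0 ?oppr0 ?scale0r // => j.
  rewrite !vacY; (repeat case: eqP => ?); try (exfalso; lia).
  by rewrite lYc0 !scaler0 subrr scaler0.
- rewrite (@fsum_single _ _ K) => [|j hj]; last first.
    rewrite !vacY; (repeat case: eqP => ?); try (exfalso; lia).
    by rewrite lYc0 !scaler0 subrr scaler0.
  rewrite !vacY; (repeat case: eqP => ?); try (exfalso; lia).
  rewrite lYc0 sub0r e2 scale1r eN2 gbinomN2 mulrA sgsq mul1r add0r.
  rewrite (_ : K.+1%:Z - 1 = K); last lia.
  by rewrite scalerN scaleNr.
- rewrite (@fsum_single _ _ K) => [|j hj]; last first.
    rewrite !vacY; (repeat case: eqP => ?); try (exfalso; lia).
    by rewrite lYc0 !scaler0 subrr scaler0.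
  rewrite !vacY; (repeat case: eqP => ?); try (exfalso; lia).
  rewrite scaler0 subr0 eN2 gbinomN2 mulrA sgsq mul1r.
  rewrite (_ : Negz K - 1 = -2 - K%:Z); last lia.
  by rewrite NegzE rmorphN opprK.
Qed.

Lemma iterT_mode j v n c :
  YM (iter j T v) n c = (\prod_(i < j) (- (n%:~R - i%:R))) *: YM v (n - j%:Z) c.
Proof.
elim: j v => [|j IH] v; first by rewrite big_ord0 scale1r subr0.
rewrite iterSr IH TmodeM big_ord_recr /= scalerA rmorphB /=.
by rewrite (_ : n - j%:Z - 1 = n - j.+1%:Z); last lia.
Qed.

Lemma prodN1 j : \prod_(i < j) (- ((-1 : int)%:~R - i%:R)) = (j`!)%:R :> CC.
Proof.
elim: j => [|j IH]; first by rewrite big_ord0.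
rewrite big_ord_recr /= IH factS natrM mulrC -natr1 rmorphN /=; ring.
Qed.

Lemma TdivM v j c : YM (Tdiv T j v) (-1) c = YM v (-1 - j%:Z) c.
Proof.
case: HM => _ linYv _ _ _.
rewrite /Tdiv (linZ (linYv _ _)) iterT_mode prodN1 scalerA mulVf ?scale1r //.
exact: fact_neq0.
Qed.
End ModT.
Arguments TdivM {V vac T Y} HV {M TM YM} HM v j c.

Lemma truncM (V : lmodType CC) (vac : V) (Y : V -> int -> V -> V)
  (M : lmodType CC) (TM : M -> M) (YM : V -> int -> M -> M)
  (HM : is_va_module vac Y TM YM) v c :
  exists N : nat, forall j, (N <= j)%N -> YM v j%:Z c = 0.
Proof.
case: HM => _ _ _ tr _; case: (tr v c) => N HN.
exists (absz N) => j hj; apply: HN; lia.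
Qed.

Section IO.
Variables (S : set CC) (V : lmodType CC) (M1 M2 M3 : lmodType CC)
  (T1 : M1 -> M1) (T2 : M2 -> M2) (T3 : M3 -> M3)
  (Y1 : V -> int -> M1 -> M1) (Y2 : V -> int -> M2 -> M2) (Y3 : V -> int -> M3 -> M3)
  (io : M1 -> CC -> M2 -> M3).
Hypothesis Hio : is_intertwining S T1 T2 T3 Y1 Y2 Y3 io.

Lemma iterT_io l x n b :
  io (iter l T1 x) n b = (\prod_(i < l) (- (n - i%:R))) *: io x (n - l%:R) b.
Proof.
case: Hio => _ _ _ I1 _.
elim: l x => [|l IH] x; first by rewrite big_ord0 scale1r subr0.
rewrite iterSr IH (proj2 (I1 _ _ _)) big_ord_recr /= scalerA.
by rewrite -natr1 (_ : n - l%:R - 1 = n - (l%:R + 1)) //; ring.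
Qed.

Lemma Tdiv_io l x n b :
  io (Tdiv T1 l x) n b = ((-1) ^+ l * gbinom n l) *: io x (n - l%:R) b.
Proof.
case: Hio => lina _ _ _ _.
rewrite /Tdiv (linZ (lina _ _)) iterT_io scalerA prodrN card_ord /gbinom.
congr (_ *: _); ring.
Qed.

Lemma trunc_io a b c : exists N : nat, forall j, (N <= j)%N -> io a (c + j%:R) b = 0.
Proof.
case: Hio => _ _ tr _ _; case: (tr a b) => ds [_ Hds].
suff [N HN] : exists N : nat, forall j, (N <= j)%N -> forall d, d \in ds ->
    forall k : nat, - (c + j%:R) - 1 != - d + k%:R.
  exists N => j hj; apply/eqP; apply: contraT => /Hds [d hd [k hk]].
  by move: (HN j hj d hd k); rewrite hk eqxx.
elim: ds {Hds} => [|d ds [N1 HN1]]; first by exists 0%N.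
case: (pselect (exists m : nat, d - 1 - c = m%:R)) => [[m hm]|hm].
- exists (maxn N1 m.+1) => j; rewrite geq_max => /andP [h1 h2] d'.
  rewrite in_cons => /orP [/eqP ->|hd'] k; last exact: HN1.
  apply/eqP => e; have : d - 1 - c = (j + k)%N%:R.
    by rewrite natrD; apply/eqP; rewrite -subr_eq0; apply/eqP; move: e => /eqP; rewrite -subr_eq0 => /eqP <-; ring.
  rewrite hm => /eqP; rewrite eqr_nat => /eqP hmj.
  by move: h2; rewrite hmj ltnNge leq_addr.
- exists N1 => j hj d'; rewrite in_cons => /orP [/eqP ->|hd'] k; last exact: HN1.
  apply/eqP => e; apply: hm; exists (j + k)%N.
  by rewrite natrD; apply/eqP; rewrite -subr_eq0; apply/eqP; move: e => /eqP; rewrite -subr_eq0 => /eqP <-; ring.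
Qed.
End IO.
Arguments Tdiv_io {S V M1 M2 M3 T1 T2 T3 Y1 Y2 Y3 io} Hio l x n b.
Arguments trunc_io {S V M1 M2 M3 T1 T2 T3 Y1 Y2 Y3 io} Hio a b c.
Arguments truncM {V vac Y M TM YM} HM v c.

Lemma shift_sum (M : zmodType) (X : nat -> M) (m N : nat) : (m <= N)%N ->
  (forall p, (N <= p)%N -> X p = 0) ->
  \sum_(p < N) X p = \sum_(p < N) (if (p < m)%N then X p else 0) + \sum_(j < N) X (m + j)%N.
Proof.
move=> hmN hX.
have -> : \sum_(p < N) X p = \sum_(p < N + m) X p.
  rewrite (big_ord_widen (N + m) X (leq_addr m N)) [LHS]big_mkcond /=.
  apply: eq_bigr => i _; case: ifP => // /negbT; rewrite -leqNgt => h.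
  by rewrite hX.
rewrite -(big_mkord xpredT) (@big_cat_nat _ _ _ m 0 (N + m)) ?leq_addl //=.
rewrite -{2}[m]add0n big_addn addnK.
congr (_ + _).
  by rewrite big_mkord (big_ord_widen N X hmN) big_mkcond.
rewrite big_mkord; by apply: eq_bigr => i _; rewrite addnC.
Qed.

Lemma dsum (M : lmodType CC) (w : nat -> CC) (c : CC) (Z : nat -> M) (N : nat) :
  (forall p, (N <= p)%N -> Z p = 0) ->
  \sum_(i < N) \sum_(k < N)
     (w i * gbinom c i * gbinom (c - 1 - i%:R) k * (-1) ^+ k) *: Z (i + k)%N
  = \sum_(p < N) (\sum_(i < p.+1)
       w i * gbinom c i * gbinom (c - 1 - i%:R) (p - i) * (-1) ^+ (p - i)) *: Z p.
Proof.
move=> hZ.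
rewrite (@sum_diag M (fun i k => (w i * gbinom c i * gbinom (c - 1 - i%:R) k * (-1) ^+ k) *: Z (i + k)%N) N) => [|i k h]; last by rewrite hZ ?scaler0.
apply: eq_bigr => p _; rewrite scaler_suml; apply: eq_bigr => i _.
by rewrite subnKC // -ltnS.
Qed.

Section Main.
Variables (S : set CC) (V : lmodType CC) (vac : V) (T : V -> V) (Y : V -> int -> V -> V).
Hypothesis HV : is_vertex_algebra vac T Y.
Variables (M1 M2 M3 : lmodType CC)
  (T1 : M1 -> M1) (Y1 : V -> int -> M1 -> M1) (T2 : M2 -> M2) (Y2 : V -> int -> M2 -> M2)
  (T3 : M3 -> M3) (Y3 : V -> int -> M3 -> M3).
Hypotheses (HM1 : is_va_module vac Y T1 Y1) (HM2 : is_va_module vac Y T2 Y2)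
  (HM3 : is_va_module vac Y T3 Y3).
Variable (io : M1 -> CC -> M2 -> M3).
Hypothesis Hio : is_intertwining S T1 T2 T3 Y1 Y2 Y3 io.

Lemma part_v v a b :
  lexpr_eq
    (lpoly (vbr Y3 v (io a (-1) b)))
    (fun c => lpoly (fun j => io a (-1) (vbr Y2 v b j)) c
            + lpoly (fun j => io (vbr Y1 v a j) (-1) b) c
            + lint (fun i => lpoly (iobr0 io (vbr Y1 v a i) b)) c).
Proof.
move=> c /classify [[m ->]|hc]; last first.
  have hn := notint_nat hc.
  rewrite (lpoly_notnat _ hn) (lpoly_notnat _ hn) (lpoly_notnat _ hn).
  rewrite lint_notint // fsum0 ?addr0 // => i.
  by rewrite lpoly_notnat ?scaler0 //; apply/notint_nat/notint_sub1n.
rewrite !lpoly_nat lint_nat.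
under eq_bigr do rewrite lpoly_nat.
rewrite /vbr /iobr0.
case: Hio => _ _ _ _ I2.
have := I2 v a b 0 m (-1).
rewrite (_ : (0:int)%:~R = 0 :> CC) // (@fsum_single _ _ 0) => [|j]; last first.
  by case: j => // j _; rewrite gbinom0S mulr0 scale0r.
rewrite (@fsumE _ _ m.+1) => [|j hj]; last by rewrite gbinom_small ?scale0r.
rewrite big_ord_recr /= gbinom0 gbinomnn mulr1 !scale1r => H.
rewrite (_ : m%:R - 1 - m%:R = -1 :> CC) in H; last by ring.
rewrite (_ : m%:Z + 0 - 0%:Z = m) in H; last by rewrite addr0 subr0.
rewrite (_ : m%:Z + 0%:Z = m) in H; last by rewrite addr0.
rewrite (_ : (0 : CC) - 1 - 0%:R = -1) in H; last by rewrite subr0 add0r.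
rewrite (_ : (-1 : CC) + 0%:R = -1) in H; last by rewrite addr0.
rewrite (_ : (0:int) + m%:Z = m) in H; last by rewrite add0r.
move/eqP: H; rewrite subr_eq => /eqP ->.
have -> : \sum_(i < m) gbinom m%:~R i *: io (Y1 v (0 + (i : nat)%:Z) a) (m%:~R - 1 - i%:R) b
  = \sum_(i < m) gbinom m%:R i *: io (Y1 v i a) (m - i.+1)%N%:R b.
  by apply: eq_bigr => i _; rewrite add0r natB1.
by rewrite [RHS]addrC -addrA (addrC (io (Y1 v m a) (-1) b)).
Qed.

Lemma part_vi v a b :
  lexpr_eq
    (iobr io (Y1 v (-1) a) b)
    (fun c => eTd T (fun x y => Y3 x (-1) y) v (iobr io a b) c
            + eTd T1 (fun x y => io x (-1) y) a (lpoly (vbr Y2 v b)) c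
            + lint (iobr_mu io a (vbr_lm Y2 v b)) c).
Proof.
move=> c hc.
have [Nb hNb] := truncM HM2 v b.
have [Na hNa] := trunc_io Hio a b c.
have HI := Hio; case: HI => lina linb _ _ I2.
have l0b : forall n x, io x n 0 = 0 by move=> n x; exact: (lin0 (linb n x)).
have l03 : forall n w, Y3 w n 0 = 0.
  by case: HM3 => _ _ linc _ _ n w; exact: (lin0 (linc n w)).
set A := fun j : nat => Y3 v (-1 - j%:Z) (io a (c + j%:R) b).
set B := fun j : nat => io a (c - 1 - j%:R) (Y2 v j b).
have hA : forall j, (Na <= j)%N -> A j = 0 by move=> j h; rewrite /A hNa.
have hB : forall j, (Nb <= j)%N -> B j = 0 by move=> j h; rewrite /B hNb.
have L : forall N, (Na <= N)%N -> (Nb <= N)%N ->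
   iobr io (Y1 v (-1) a) b c = \sum_(j < N) A j + \sum_(j < N) B j.
  move=> N h1 h2.
  have := I2 v a b (-1) 0 c.
  rewrite [X in _ = X -> _](@fsum_single _ _ 0) => [|j]; last first.
    by case: j => // j _; rewrite (_ : (0:int)%:~R = 0 :> CC) // gbinom0S scale0r.
  rewrite gbinom0 scale1r (_ : (-1:int) + 0%:Z = -1) //.
  rewrite (_ : (0:int)%:~R + c - 0%:R = c); last by rewrite subr0 add0r.
  rewrite /iobr => <-.
  rewrite (_ : (-1:int)%:~R = -1 :> CC) // e1.
  rewrite (@fsumE _ _ N) => [|j hj]; last first.
    rewrite add0r hNa ?(leq_trans h1) // hNb ?(leq_trans h2) //.
    by rewrite l03 l0b scaler0 subr0 scaler0.
  rewrite -big_split; apply: eq_bigr => j _ /=.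
  rewrite gbinomN1 sgsq scale1r scaleN1r opprK !add0r /A /B.
  by rewrite (_ : -1 + c - j%:R = c - 1 - j%:R); last by ring.
have T1eq : forall N, (Na <= N)%N ->
    eTd T (fun x y => Y3 x (-1) y) v (iobr io a b) c = \sum_(j < N) A j.
  move=> N hN; rewrite /eTd (@fsumE _ _ N) => [|j hj]; last first.
    by rewrite /iobr (TdivM HV HM3) hNa ?l03 // (leq_trans hN).
  by apply: eq_bigr => j _; rewrite (TdivM HV HM3).
have inner : forall (w : nat -> CC) N, (Nb <= N)%N ->
    \sum_(i < N) (w i * gbinom c i) *: iobr_mu io a (vbr_lm Y2 v b) i (c - 1 - i%:R)
    = \sum_(p < N) (\sum_(i < p.+1) w i * gbinom c i * gbinom (c - 1 - i%:R) (p - i)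
                       * (-1) ^+ (p - i)) *: B p.
  move=> w N hN; rewrite -dsum => [|p hp]; last by rewrite hB // (leq_trans hN).
  apply: eq_bigr => i _; rewrite /iobr_mu (@fsumE _ _ N) => [|k hk]; last first.
    by rewrite /vbr_lm hNb ?scaler0 ?l0b ?scaler0 // (leq_trans hN) // (leq_trans hk) // leq_addl.
  rewrite scaler_sumr; apply: eq_bigr => k _.
  rewrite /vbr_lm (linZ (linb _ _)) !scalerA /B natrD.
  by congr (_ *: io a _ _); ring.
case: (classify _ hc) => [[m em]|hn].
- pose N := (Na + Nb + m)%N.
  have hNa' : (Na <= N)%N by rewrite /N; lia.
  have hNb' : (Nb <= N)%N by rewrite /N; lia.
  have hm' : (m <= N)%N by rewrite /N; lia.
  rewrite (L N) // (T1eq N) // -addrA; congr (_ + _).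
  rewrite (@shift_sum _ B m N) // => [|p hp]; last by rewrite hB // (leq_trans hNb').
  rewrite addrC; congr (_ + _).
    rewrite [in RHS]em lint_nat.
    rewrite (big_ord_widen N (fun i => gbinom m%:R i *:
       iobr_mu io a (vbr_lm Y2 v b) i (m - i.+1)%N%:R) hm') big_mkcond /=.
    transitivity (\sum_(i < N) ((i < m)%N%:R * gbinom c i) *:
        iobr_mu io a (vbr_lm Y2 v b) i (c - 1 - i%:R)); last first.
      rewrite [RHS]big_mkcond; apply: eq_bigr => i _; case: ifP => him; last by rewrite mul0r scale0r.
      by rewrite mul1r em natB1.
    rewrite (inner (fun i => (i < m)%N%:R)) //; apply: eq_bigr => p _.
    rewrite (_ : \sum_(i < p.+1) _ = (p < m)%N%:R); last first.
      rewrite -(Fid_nat m) -em; apply: eq_bigr => i _.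
      by case: ifP => _; rewrite ?mul1r ?mul0r.
    by case: ifP => _; rewrite ?scale1r ?scale0r.
  rewrite /eTd (@fsumE _ _ N) => [|j hj]; last first.
    rewrite em -natrD lpoly_nat /vbr hNb ?l0b //.
    by rewrite (leq_trans hNb') // (leq_trans hj) // leq_addl.
  apply: eq_bigr => j _; rewrite em -natrD lpoly_nat /vbr (Tdiv_io Hio) gbinomN1 sgsq.
  by rewrite scale1r /B em natrD; congr (io a _ _); ring.
pose N := (Na + Nb)%N.
have hNa' : (Na <= N)%N by rewrite /N; lia.
have hNb' : (Nb <= N)%N by rewrite /N; lia.
rewrite (L N) // (T1eq N) // -addrA; congr (_ + _).
rewrite {1}/eTd fsum0 ?add0r => [|j]; last first.
  by rewrite (lpoly_notnat _ (notint_nat (notint_addn j hn))) l0b.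
rewrite lint_notint // (@fsumE _ _ N) => [|i hi]; last first.
  rewrite /iobr_mu fsum0 ?scaler0 // => k.
  by rewrite /vbr_lm hNb ?scaler0 ?l0b ?scaler0 // (leq_trans hNb') // (leq_trans hi) // leq_addr.
under [RHS]eq_bigr => i _ do rewrite -[gbinom c i]mul1r.
rewrite (inner (fun _ => 1)) //; apply: eq_bigr => p _.
rewrite (_ : \sum_(i < p.+1) _ = 1) ?scale1r //.
rewrite -[RHS](Fid c p); apply: eq_bigr => i _ /=; by rewrite mul1r.
Qed.

Lemma part_vii v a b :
  lexpr_eq
    (iobr io a (Y2 v (-1) b))
    (fun c => Y3 v (-1) (iobr io a b c)
            + lpoly (fun i => io (abr_v T1 Y1 a v i) (-1) b) c
            + lint (fun i => iobr io (abr_v T1 Y1 a v i) b) c).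
Proof.
move=> c hc.
have [Nv hNv] := truncM HM1 v a.
have HI := Hio; case: HI => lina linb _ _ I2.
have l0a : forall n y, io 0 n y = 0 by move=> n y; exact: (lin0 (lina n y)).
have lT0 : forall l, Tdiv T1 l 0 = 0.
  move=> l; rewrite /Tdiv; suff -> : iter l T1 0 = 0 by rewrite scaler0.
  case: HM1 => linT _ _ _ _; elim: l => // l IH; by rewrite iterS IH (lin0 linT).
set Z := fun p : nat => - ((-1) ^+ p *: io (Y1 v p a) (c - 1 - p%:R) b).
have hZ : forall p, (Nv <= p)%N -> Z p = 0.
  by move=> p h; rewrite /Z hNv // l0a scaler0 oppr0.
have L : forall N, (Nv <= N)%N ->
   iobr io a (Y2 v (-1) b) c = Y3 v (-1) (iobr io a b c) + \sum_(p < N) Z p.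
  move=> N hN.
  have := I2 v a b 0 (-1) c.
  rewrite (@fsum_single _ _ 0) => [|j]; last first.
    by case: j => // j _; rewrite (_ : (0:int)%:~R = 0 :> CC) // gbinom0S mulr0 scale0r.
  rewrite (@fsumE _ _ N) => [|j hj]; last by rewrite add0r hNv ?l0a ?scaler0 // (leq_trans hN).
  rewrite expr0 gbinom0 mulr1 scale1r expr0z scale1r (_ : (-1:int) + 0 - 0%:Z = -1) //.
  rewrite (_ : (0:int)%:~R + c - 0%:R = c); last by rewrite subr0 add0r.
  rewrite addr0 => H.
  have HS : \sum_(j < N) gbinom (-1)%:~R j *: io (Y1 v (0 + j%:Z) a) ((-1)%:~R + c - j%:R) b
      = - \sum_(p < N) Z p.
    rewrite -sumrN; apply: eq_bigr => j _.
    rewrite /Z opprK (_ : (-1:int)%:~R = -1 :> CC) // gbinomN1 add0r.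
    by congr (_ *: io _ _ _); ring.
  rewrite /iobr (_ : io a c (Y2 v (-1) b) = Y3 v (-1) (io a c b) - (Y3 v (-1) (io a c b) - io a c (Y2 v (-1) b))); last by rewrite opprB addrC subrK.
  by rewrite H HS opprK.
have abr_io : forall i n N, (Nv <= N)%N -> io (abr_v T1 Y1 a v i) n b =
    - \sum_(l < N) ((-1) ^+ (i + l) * ((-1) ^+ l * gbinom n l)) *:
        io (Y1 v (i + l)%N%:Z a) (n - l%:R) b.
  move=> i n N hN; rewrite /abr_v (@fsumE _ _ N) => [|l hl]; last first.
    by rewrite hNv ?lT0 ?scaler0 // (leq_trans hN) // (leq_trans hl) // leq_addl.
  rewrite (linN (lina _ _)) (lin_sum (lina _ _)); congr (- _); apply: eq_bigr => l _.
  by rewrite (linZ (lina _ _)) (Tdiv_io Hio) scalerA.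
have inner : forall (w : nat -> CC) N, (Nv <= N)%N ->
    \sum_(i < N) (w i * gbinom c i) *: io (abr_v T1 Y1 a v i) (c - 1 - i%:R) b
    = \sum_(p < N) (\sum_(i < p.+1) w i * gbinom c i * gbinom (c - 1 - i%:R) (p - i)
                       * (-1) ^+ (p - i)) *: Z p.
  move=> w N hN; rewrite -dsum => [|p hp]; last by rewrite hZ // (leq_trans hN).
  apply: eq_bigr => i _; rewrite (abr_io i _ N hN) scalerN scaler_sumr -sumrN.
  apply: eq_bigr => k _.
  rewrite /Z scalerN !scalerA natrD.
  by congr (- (_ *: io _ _ _)); ring.
case: (classify _ hc) => [[m em]|hn].
- pose N := (Nv + m)%N.
  have hNv' : (Nv <= N)%N by rewrite /N; lia.
  have hm' : (m <= N)%N by rewrite /N; lia.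
  rewrite (L N) // -addrA; congr (_ + _).
  rewrite (@shift_sum _ Z m N) // => [|p hp]; last by rewrite hZ // (leq_trans hNv').
  rewrite [LHS]addrC; congr (_ + _).
    rewrite {1}em lpoly_nat (abr_io m (-1) N hNv') -sumrN; apply: eq_bigr => j _.
    rewrite /Z gbinomN1 sgsq mulr1 em natrD.
    by congr (- (_ *: io _ _ _)); ring.
  rewrite [in RHS]em lint_nat.
  rewrite (big_ord_widen N (fun i => gbinom m%:R i *:
     iobr io (abr_v T1 Y1 a v i) b (m - i.+1)%N%:R) hm').
  transitivity (\sum_(i < N) ((i < m)%N%:R * gbinom c i) *:
      io (abr_v T1 Y1 a v i) (c - 1 - i%:R) b); last first.
    rewrite [RHS]big_mkcond; apply: eq_bigr => i _; case: ifP => him; last by rewrite mul0r scale0r.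
    by rewrite mul1r em natB1.
  rewrite (inner (fun i => (i < m)%N%:R)) //; apply: eq_bigr => p _.
  rewrite (_ : \sum_(i < p.+1) _ = (p < m)%N%:R); last first.
    rewrite -(Fid_nat m) -em; apply: eq_bigr => i _.
    by case: ifP => _; rewrite ?mul1r ?mul0r.
  by case: ifP => _; rewrite ?scale1r ?scale0r.
pose N := Nv.
rewrite (L N) // -addrA; congr (_ + _).
rewrite (lpoly_notnat _ (notint_nat hn)) add0r.
rewrite lint_notint // (@fsumE _ _ N) => [|i hi]; last first.
  rewrite /iobr (abr_io i _ N (leqnn _)) big1 ?oppr0 ?scaler0 // => l _.
  by rewrite hNv ?l0a ?scaler0 // (leq_trans hi) // leq_addr.
under [RHS]eq_bigr => i _ do rewrite -[gbinom c i]mul1r.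
rewrite (inner (fun _ => 1)) //; apply: eq_bigr => p _.
rewrite (_ : \sum_(i < p.+1) _ = 1) ?scale1r //.
rewrite -[RHS](Fid c p); apply: eq_bigr => i _ /=; by rewrite mul1r.
Qed.
End Main.

Theorem proposition3p6
  (S : set CC) (HS : admissible_exponents S)
  (V : lmodType CC) (vac : V) (T : V -> V) (Y : V -> int -> V -> V)
  (HV : is_vertex_algebra vac T Y)
  (M1 M2 M3 : lmodType CC)
  (T1 : M1 -> M1) (Y1 : V -> int -> M1 -> M1) (HM1 : is_va_module vac Y T1 Y1)
  (T2 : M2 -> M2) (Y2 : V -> int -> M2 -> M2) (HM2 : is_va_module vac Y T2 Y2)
  (T3 : M3 -> M3) (Y3 : V -> int -> M3 -> M3) (HM3 : is_va_module vac Y T3 Y3)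
  (io : M1 -> CC -> M2 -> M3)
  (Hio : is_intertwining S T1 T2 T3 Y1 Y2 Y3 io) :
  forall (v : V) (a : M1) (b : M2),
  (* (v)  [v_l (a.b)] = a.[v_l b] + [v_l a].b + int_0^l [[v_l a]_mu b]^0 dmu *)
  lexpr_eq
    (lpoly (vbr Y3 v (io a (-1) b)))
    (fun c => lpoly (fun j => io a (-1) (vbr Y2 v b j)) c
            + lpoly (fun j => io (vbr Y1 v a j) (-1) b) c
            + lint (fun i => lpoly (iobr0 io (vbr Y1 v a i) b)) c)
  /\
  (* (vi) [(v.a)_l b] = (e^{T d_l} v)[a_l b] + (e^{T d_l} a)[v_l b]
                        + int_0^l [a_mu [v_{l-mu} b]] dmu *)
  lexpr_eq
    (iobr io (Y1 v (-1) a) b)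
    (fun c => eTd T (fun x y => Y3 x (-1) y) v (iobr io a b) c
            + eTd T1 (fun x y => io x (-1) y) a (lpoly (vbr Y2 v b)) c
            + lint (iobr_mu io a (vbr_lm Y2 v b)) c)
  /\
  (* (vii) [a_l (v.b)] = v.[a_l b] + [a_l v].b + int_0^l [[a_l v]_mu b] dmu *)
  lexpr_eq
    (iobr io a (Y2 v (-1) b))
    (fun c => Y3 v (-1) (iobr io a b c)
            + lpoly (fun i => io (abr_v T1 Y1 a v i) (-1) b) c
            + lint (fun i => iobr io (abr_v T1 Y1 a v i) b) c).
Proof.
move=> v a b; split; first exact: (@part_v _ _ _ _ _ _ _ _ _ _ _ _ Hio v a b).
split; first exact: (@part_vi _ _ _ _ _ HV _ _ _ _ _ _ _ _ _ HM2 HM3 _ Hio v a b).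
exact: (@part_vii _ _ _ _ _ _ _ _ _ _ _ _ _ HM1 _ Hio v a b).
Qed.
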